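(* In the setting of the context, let $x\in(-3N,3N)$ be such that $f_N(x)\ge1$ and let $\varepsilon\in(0,1)$. Let $w\in W^{1,2}([-1,1])$ with $w(\pm1)=\pm f_N(x)$ and assume $H_x(w)\le H_x(v_N(x,\cdot))+\varepsilon$. Then there exists $C>0$ (uniform over the choice of $x$ and $\varepsilon$) such that $$\|w-v_N(x,\cdot)\|_{L^\infty([-1,1])}\le C\varepsilon^{1/2}.$$
   Context: Fix a small universal constant $\alpha\in(0,1)$ (e.g. $\alpha=1/10$). For $N>0$ define $f_N:[-3N,3N]\to\mathbb{R}$ by $f_N(x)=1-\alpha$ if $|x|\le N$, $f_N(x)=\frac{|x|(1+\alpha)}{N}-2\alpha$ if $N\le|x|\le2N$, $f_N(x)=2$ if $2N\le|x|\le3N$. For $x\in[-3N,3N]$ and $w\in W^{1,2}([-1,1])$, $H_x(w)=\int_{-1}^1(w'(y))^2dy+|\{w\ne0\}\cap[-1,1]|$, and $v_N(x,\cdot)$ is the unique minimizer of $H_x$ among $w\in W^{1,2}([-1,1])$ with $w(\pm1)=\pm f_N(x)$. *)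

(* Defs.v *)
From HB Require Import structures.
From mathcomp Require Import all_boot all_order all_algebra.
From mathcomp Require Import all_classical all_reals all_analysis.
Set Implicit Arguments. Unset Strict Implicit. Unset Printing Implicit Defensive.
Import Order.TTheory GRing.Theory Num.Theory.
Import numFieldNormedType.Exports.
Local Open Scope classical_set_scope.
Local Open Scope ring_scope.

Section defs.
Variable R : realType.
Let I11 : set R := `[-1, 1].

Definition fN (alpha N x : R) : R :=
  if `|x| <= N then 1 - alpha
  else if `|x| <= 2 * N then `|x| * (1 + alpha) / N - 2 * alpha
  else 2.

(* w belongs to W^{1,2}([-1,1]) with weak derivative g: g is square
   integrable on [-1,1] and w is the primitive of g on [-1,1]
   (1D characterization: W^{1,2} = absolutely continuous with L^2 derivative). *)
Definition W12 (w g : R -> R) : Prop :=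
  measurable_fun (`[-1, 1] : set R) g /\
  (lebesgue_measure : set R -> \bar R).-integrable I11 (fun y => ((g y) ^+ 2)%:E) /\
  (lebesgue_measure : set R -> \bar R).-integrable I11 (fun y => (g y)%:E) /\
  forall y, -1 <= y <= 1 ->
    w y = w (-1) + Rintegral lebesgue_measure (`[-1, y] : set R) g.

Definition Hx (w g : R -> R) : \bar R :=
  (\int[lebesgue_measure]_(y in I11) ((g y) ^+ 2)%:E
   + lebesgue_measure [set y : R | ((-1 <= y <= 1) /\ w y != 0)%R])%E.

Definition admissible (alpha N x : R) (w g : R -> R) : Prop :=
  W12 w g /\ w (-1) = - fN alpha N x /\ w 1 = fN alpha N x.

Definition is_minimizer (alpha N x : R) (v gv : R -> R) : Prop :=
  admissible alpha N x v gv /\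
  forall u gu, admissible alpha N x u gu -> (Hx v gv <= Hx u gu)%E.

End defs.

(* Main.v *)
Require Import Defs.
From HB Require Import structures.
From mathcomp Require Import all_boot all_order all_algebra.
From mathcomp Require Import all_classical all_reals all_analysis.
From mathcomp Require Import ring lra measurable_realfun.
Import Order.TTheory GRing.Theory Num.Theory.
Import numFieldNormedType.Exports.
Local Open Scope classical_set_scope.
Local Open Scope ring_scope.
Set Implicit Arguments. Unset Strict Implicit. Unset Printing Implicit Defensive.

Section S.
Variable R : realType.
Notation mu := (@lebesgue_measure R).
Definition II (a b : R) (h : R -> R) := \int[mu]_(x in `[a, b]) h x.
Definition intg (a b : R) (h : R -> R) :=
  mu.-integrable (`[a, b] : set R) (EFin \o h).

Lemma intgS a b c d h : a <= c -> d <= b -> intg a b h -> intg c d h.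
Proof.
move=> ac db; apply: integrableS => //.
by apply: subset_itv; rewrite bnd_simp.
Qed.

Lemma II_split a m b h : a <= m -> m <= b -> intg a b h ->
  II a b h = II a m h + II m b h.
Proof.
move=> am mb ih; rewrite /II.
have := @Rintegral_itvB R h (BLeft a) (BRight b) m ih.
rewrite !bnd_simp => /(_ am mb) E.
rewrite [in X in _ = _ + X]/Rintegral -integral_itv_obnd_cbnd; last first.
  apply: measurable_funS (measurable_int _ ih) => //.
  by apply: subset_itv; rewrite bnd_simp.
rewrite -/(Rintegral _ _ _) -E; lra.
Qed.

Lemma intg_cst a b k : intg a b (fun=> k).
Proof.
apply/integrableP; split; first exact/measurable_EFinP.
rewrite integral_cst //= lebesgue_measure_itv /=.
case: ifP => _; last by rewrite mule0 ltry.
by rewrite -EFinD -EFinM ltry.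
Qed.

Lemma II_cst a b k : a <= b -> II a b (fun=> k) = k * (b - a).
Proof.
move=> ab; rewrite /II Rintegral_cst //.
have := lebesgue_measure_itv `[a, b]%R; rewrite /= lte_fin => E.
rewrite [mu _]E.
case: (boolP (a < b)) => [_|]; first by rewrite -EFinD.
rewrite -leNgt => ba.
have -> : a = b by apply/le_anti; rewrite ab ba.
by rewrite subrr mulr0.

Qed.


Lemma intgD a b f g : intg a b f -> intg a b g -> intg a b (fun x => f x + g x).
Proof.
move=> hf hg; apply: eq_integrable (integrableD _ hf hg) => //.
Qed.

Lemma intgN a b f : intg a b f -> intg a b (fun x => - f x).
Proof.
move=> hf; apply: eq_integrable (integrableN hf) => //.
Qed.

Lemma intgZ a b k f : intg a b f -> intg a b (fun x => k * f x).
Proof.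
move=> hf; apply: eq_integrable (integrableZl _ k hf) => //.
Qed.

Lemma intg_sq a b h c : intg a b h -> intg a b (fun x => h x ^+ 2) ->
  intg a b (fun x => (h x - c) ^+ 2).
Proof.
move=> h1 h2.
have := intgD (intgD h2 (intgZ (- (2 * c)) h1)) (intg_cst a b (c ^+ 2)).
apply: eq_integrable => // x _ /=; congr (_%:E); ring.
Qed.

Lemma IID a b f g : intg a b f -> intg a b g ->
  II a b (fun x => f x + g x) = II a b f + II a b g.
Proof. by move=> hf hg; rewrite /II RintegralD. Qed.

Lemma IIZ a b k f : intg a b f -> II a b (fun x => k * f x) = k * II a b f.
Proof. by move=> hf; rewrite /II RintegralZl. Qed.

Lemma II_sq a b h c : a <= b -> intg a b h -> intg a b (fun x => h x ^+ 2) ->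
  II a b (fun x => (h x - c) ^+ 2) =
  II a b (fun x => h x ^+ 2) - 2 * c * II a b h + c ^+ 2 * (b - a).
Proof.
move=> ab h1 h2.
rewrite (_ : (fun x => (h x - c) ^+ 2) =
   (fun x => (h x ^+ 2 + (- (2 * c)) * h x) + c ^+ 2)); last first.
  by apply: funext => x; ring.
rewrite IID; [|exact: intgD h2 (intgZ _ h1)|exact: intg_cst].
rewrite IID //; last exact: intgZ.
rewrite IIZ // II_cst //; ring.
Qed.

Lemma II_ge0 a b h : (forall x, a <= x <= b -> 0 <= h x) -> 0 <= II a b h.
Proof.
move=> h0; apply: Rintegral_ge0 => x /=; rewrite in_itv /=; exact: h0.
Qed.

Lemma discr (A B L : R) : 0 <= L -> (forall c, 0 <= A - 2 * c * B + c ^+ 2 * L) ->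
  B ^+ 2 <= L * A.
Proof.
move=> L0 H.
have [Lp|] := ltP 0 L.
  have := H (B / L).
  set u := B / L.
  have -> : B = u * L by rewrite /u mulrVK // unitfE gt_eqF.
  move=> h; nra.
move=> L0'; have L00 : L = 0 by apply/le_anti; rewrite L0 L0'.
subst L.
have A0 := H 0.
have [->|Bn] := eqVneq B 0; first by rewrite expr0n /= mul0r.
have := H ((A + 1) / (2 * B)).
rewrite mulr0 addr0 (_ : 2 * ((A + 1) / (2 * B)) * B = A + 1); last first.
  by field; rewrite Bn.
lra.
Qed.


Lemma CS a b h : a <= b -> intg a b h -> intg a b (fun x => h x ^+ 2) ->
  II a b h ^+ 2 <= (b - a) * II a b (fun x => h x ^+ 2).
Proof.
move=> ab h1 h2; apply: discr; first by rewrite subr_ge0.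
move=> c; rewrite -II_sq //; apply: II_ge0 => x _; exact: sqr_ge0.
Qed.

Lemma first_zero (w : R -> R) (G : R) : 0 <= G ->
  (forall a b, -1 <= a -> a <= b -> b <= 1 -> (w b - w a) ^+ 2 <= (b - a) * G) ->
  w (-1) < 0 -> 0 < w 1 ->
  exists t, [/\ -1 < t, t <= 1, w t = 0 & forall y, -1 <= y < t -> w y != 0].
Proof.
move=> G0 hol wm1 w1.
pose S := [set s | -1 <= s <= 1 /\ forall y, -1 <= y <= s -> w y < 0].
have S1 : S (-1).
  split; first by rewrite lexx /=; lra.
  move=> y /andP[y1 y2]; have -> : y = -1 by apply/le_anti; rewrite y1 y2.
  exact: wm1.
have hs : has_sup S.
  by split; [exists (-1) | exists 1 => s [/andP[_ ]]].
set t := sup S.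
have tub := sup_upper_bound hs.
have tm1 : -1 <= t by exact: tub.
have t1 : t <= 1 by apply: ge_sup; [exists (-1) | move=> s [/andP[_ ]]].
have ha : forall y, -1 <= y < t -> w y < 0.
  move=> y /andP[y1 yt].
  have ty0 : 0 < t - y by lra.
  have [s [_ Ss] ys] := sup_adherent ty0 hs.
  apply: Ss; rewrite y1 /=; rewrite -/t in ys; lra.
have hb : w t <= 0.
  rewrite leNgt; apply/negP => wt.
  have eta0 : 0 < (w t) ^+ 2 / (G + 1) by apply: divr_gt0; [nra|lra].
  have [s [hs12 Ss] ts] := sup_adherent eta0 hs.
  have /andP[s1 s2] := hs12.
  rewrite -/t in ts.
  have st : s <= t by exact: tub.
  have ws : w s < 0 by apply: Ss; rewrite s1 lexx.
  have := hol s t s1 st t1.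
  have : (t - s) * G <= (w t) ^+ 2 / (G + 1) * G by apply: ler_wpM2r => //; lra.
  have : (w t) ^+ 2 / (G + 1) * G < (w t) ^+ 2.
    rewrite mulrAC ltr_pdivrMr; last lra.
    nra.
  nra.
have hc : 0 <= w t.
  rewrite leNgt; apply/negP => wt.
  have tlt1 : t < 1.
    rewrite lt_neqAle t1 andbT; apply/negP => /eqP E; rewrite E in wt; lra.
  pose eta := Num.min (1 - t) ((w t) ^+ 2 / (G + 1)).
  have eta0 : 0 < eta.
    rewrite lt_min subr_gt0 tlt1 /=; apply: divr_gt0; [nra|lra].
  have e1 : eta <= 1 - t by rewrite ge_min lexx.
  have e2 : eta <= (w t) ^+ 2 / (G + 1) by rewrite ge_min lexx orbT.
  have e3 : (w t) ^+ 2 / (G + 1) * G < (w t) ^+ 2.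
    rewrite mulrAC ltr_pdivrMr; last lra.
    nra.
  have Ss : S (t + eta).
    split; first by apply/andP; split; lra.
    move=> y /andP[y1 y2].
    have [yt|ty] := ltP y t; first by apply: ha; rewrite y1 yt.
    have y1' : y <= 1 by lra.
    have := hol t y tm1 ty y1'.
    have : (y - t) * G <= eta * G by apply: ler_wpM2r => //; lra.
    have : eta * G <= (w t) ^+ 2 / (G + 1) * G by apply: ler_wpM2r.
    move=> h1 h2 h3.
    rewrite ltNge; apply/negP => wy.
    have : 0 <= w y * (w y - 2 * w t) by apply: mulr_ge0; lra.
    nra.
  have := tub _ Ss; rewrite -/t; lra.
have wt0 : w t = 0 by apply/le_anti; rewrite hb hc.
exists t; split => //.
- rewrite lt_neqAle tm1 andbT; apply/negP => /eqP E.
  by move: wm1; rewrite E wt0 ltxx.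
- by move=> y hy; rewrite lt_eqF // ha.
Qed.


End S.

Section S2.
Variable R : realType.
Lemma sqrt_bound (a k eps : R) : 0 <= k -> 0 <= eps -> a ^+ 2 <= k ^+ 2 * eps ->
  `|a| <= k * Num.sqrt eps.
Proof.
move=> k0 e0 h.
rewrite -sqrtr_sqr.
have {1}-> : k = Num.sqrt (k ^+ 2) by rewrite sqrtr_sqr ger0_norm.
rewrite -sqrtrM ?sqr_ge0 //; exact: ler_wsqrtr.
Qed.

Lemma alg (p q f : R) : 0 < p -> 0 < q -> p + q <= 2 -> 1 <= f ->
  (1 - p) ^+ 2 / 2 + (1 - q) ^+ 2 / 2 <= f ^+ 2 / p + f ^+ 2 / q + p + q - 2 * f ^+ 2 - 2.
Proof.
move=> p0 q0 pq f1.
have pn : p != 0 by rewrite gt_eqF.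
have qn : q != 0 by rewrite gt_eqF.
have uv2 : 2 <= p^-1 + q^-1.
  have -> : p^-1 + q^-1 = (p + q) / (p * q) by field; rewrite pn qn.
  rewrite ler_pdivlMr; last exact: mulr_gt0.
  have : 0 <= (p - q) ^+ 2 by exact: sqr_ge0.
  have : 0 <= (2 - (p + q)) * (p + q) by apply: mulr_ge0; lra.
  nra.
have f2 : 1 <= f ^+ 2.
  rewrite expr2; have := ler_pM ler01 ler01 f1 f1; rewrite mul1r; exact.
have h1 : p^-1 + q^-1 - 2 <= f ^+ 2 * (p^-1 + q^-1 - 2).
  rewrite -{1}(mul1r (_ - 2)); apply: ler_wpM2r; lra.
have hp : (1 - p) ^+ 2 / 2 <= p^-1 + p - 2.
  have -> : p^-1 + p - 2 = (1 - p) ^+ 2 / p by field; rewrite ?pn ?qn.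
  apply: ler_wpM2l; first exact: sqr_ge0.
  rewrite lef_pV2 ?posrE //; lra.
have hq : (1 - q) ^+ 2 / 2 <= q^-1 + q - 2.
  have -> : q^-1 + q - 2 = (1 - q) ^+ 2 / q by field; rewrite ?pn ?qn.
  apply: ler_wpM2l; first exact: sqr_ge0.
  rewrite lef_pV2 ?posrE //; lra.
have -> : f ^+ 2 / p + f ^+ 2 / q + p + q - 2 * f ^+ 2 - 2 =
  f ^+ 2 * (p^-1 + q^-1 - 2) + p + q - 2 by ring.
lra.
Qed.
End S2.

Section S7.
Variable R : realType.

Lemma Kbound (r f d : R) : 0 <= r <= 1 -> 0 <= f <= 2 -> (r * f * d) ^+ 2 <= 4 * d ^+ 2.
Proof.
move=> /andP[r0 r1] /andP[f0 f2].
rewrite !exprMn; apply: ler_wpM2r; first exact: sqr_ge0.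
have r2 : r ^+ 2 <= 1 by rewrite expr2; have := ler_pM r0 r0 r1 r1; rewrite mulr1.
have f4 : f ^+ 2 <= 4.
  rewrite expr2 (_ : 4 = 2 * 2 :> R); last by lra.
  exact: ler_pM.
have := ler_pM (sqr_ge0 r) (sqr_ge0 f) r2 f4; rewrite mul1r //.
Qed.

Lemma nn (a b : R) (h : R -> R) : 0 <= II a b (fun x => h x ^+ 2).
Proof. by apply: II_ge0 => x _; exact: sqr_ge0. Qed.

Lemma left_part (f eps t1 : R) (w g : R -> R) (y : R) :
  1 <= f <= 2 -> 0 <= eps -> -1 < t1 -> t1 <= 1 -> -1 <= y -> y <= t1 ->
  intg (-1) t1 g -> intg (-1) t1 (fun x => g x ^+ 2) ->
  w y = II (-1) y g - f ->
  II (-1) t1 (fun x => (g x - f / (t1 + 1)) ^+ 2) <= eps ->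
  (1 - (t1 + 1)) ^+ 2 <= 2 * eps ->
  `|w y - f * y| <= 6 * Num.sqrt eps.
Proof.
move=> /andP[f1 f2] e0 t1m t11 y1 yt1 ig1 ig12 wy dE1 dp.
set p := t1 + 1 in dE1 dp *.
have p0 : 0 < p by rewrite /p; lra.
set c1 := f / p in dE1 *.
set E1 := II _ _ _ in dE1.
pose h := fun x => g x + (- c1).
have ih : intg (-1) t1 h by apply: intgD ig1 (intg_cst _ _ _).
have ih2 : intg (-1) t1 (fun x => h x ^+ 2) by apply: intg_sq.
have ihy : intg (-1) y h by apply: intgS ih; lra.
have ih2y : intg (-1) y (fun x => h x ^+ 2) by apply: intgS ih2; lra.
have Jd : II (-1) y h = II (-1) y g - c1 * (y + 1).
  rewrite /h IID; [|apply: intgS ig1; lra|exact: intg_cst].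
  rewrite II_cst //; ring.
have CSJ := CS y1 ihy ih2y.
have Jle : II (-1) y (fun x => h x ^+ 2) <= E1.
  rewrite /E1 (@II_split _ (-1) y t1) //.
  have := nn y t1 h; rewrite /h; lra.
have E10 : 0 <= II (-1) y (fun x => h x ^+ 2) by exact: nn.
have J2 : II (-1) y h ^+ 2 <= 2 ^+ 2 * eps.
  apply: le_trans CSJ _.
  have : (y - -1) * II (-1) y (fun x => h x ^+ 2) <= 2 * eps.
    apply: ler_pM; [lra| exact: E10 | lra | lra].
  lra.
have KK : w y - f * y = II (-1) y h + ((y + 1) / p * f * (1 - p)).
  have pn : p != 0 by rewrite gt_eqF.
  by rewrite Jd wy /c1; field.
have K2 : ((y + 1) / p * f * (1 - p)) ^+ 2 <= 4 ^+ 2 * eps.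
  apply: le_trans (Kbound _ _ _) _.
  - apply/andP; split; first by apply: divr_ge0; lra.
    by rewrite ler_pdivrMr // mul1r /p; lra.
  - by apply/andP; split; lra.
  - lra.
rewrite KK; apply: le_trans (ler_normD _ _) _.
have k2 : (0 : R) <= 2 by lra.
have k4 : (0 : R) <= 4 by lra.
have := sqrt_bound k2 e0 J2; have := sqrt_bound k4 e0 K2.
lra.
Qed.

Lemma right_part (f eps t2 : R) (w g : R -> R) (y : R) :
  1 <= f <= 2 -> 0 <= eps -> -1 <= t2 -> t2 < 1 -> t2 <= y -> y <= 1 ->
  intg t2 1 g -> intg t2 1 (fun x => g x ^+ 2) ->
  w y = f - II y 1 g ->
  II t2 1 (fun x => (g x - f / (1 - t2)) ^+ 2) <= eps ->
  (1 - (1 - t2)) ^+ 2 <= 2 * eps ->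
  `|w y - f * y| <= 6 * Num.sqrt eps.
Proof.
move=> /andP[f1 f2] e0 t2m t21 y1 y2 ig1 ig12 wy dE2 dq.
set q := 1 - t2 in dE2 dq *.
have q0 : 0 < q by rewrite /q; lra.
set c2 := f / q in dE2 *.
set E2 := II _ _ _ in dE2.
pose h := fun x => g x + (- c2).
have ih : intg t2 1 h by apply: intgD ig1 (intg_cst _ _ _).
have ih2 : intg t2 1 (fun x => h x ^+ 2) by apply: intg_sq.
have ihy : intg y 1 h by apply: intgS ih; lra.
have ih2y : intg y 1 (fun x => h x ^+ 2) by apply: intgS ih2; lra.
have Jd : II y 1 h = II y 1 g - c2 * (1 - y).
  rewrite /h IID; [|apply: intgS ig1; lra|exact: intg_cst].
  rewrite II_cst //; ring.
have CSJ := CS y2 ihy ih2y.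
have Jle : II y 1 (fun x => h x ^+ 2) <= E2.
  rewrite /E2 (@II_split _ t2 y 1) //.
  have := nn t2 y h; rewrite /h; lra.
have E20 : 0 <= II y 1 (fun x => h x ^+ 2) by exact: nn.
have J2 : II y 1 h ^+ 2 <= 2 ^+ 2 * eps.
  apply: le_trans CSJ _.
  have : (1 - y) * II y 1 (fun x => h x ^+ 2) <= 2 * eps.
    apply: ler_pM; [lra| exact: E20 | lra | lra].
  lra.
have KK : w y - f * y = - II y 1 h + ((1 - y) / q * f * (q - 1)).
  have qn : q != 0 by rewrite gt_eqF.
  by rewrite Jd wy /c2; field.
have K2 : ((1 - y) / q * f * (q - 1)) ^+ 2 <= 4 ^+ 2 * eps.
  apply: le_trans (Kbound _ _ _) _.
  - apply/andP; split; first by apply: divr_ge0; lra.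
    by rewrite ler_pdivrMr // mul1r /q; lra.
  - by apply/andP; split; lra.
  - rewrite (_ : (q - 1) ^+ 2 = (1 - q) ^+ 2); [lra|ring].
rewrite KK; apply: le_trans (ler_normD _ _) _.
rewrite normrN.
have k2 : (0 : R) <= 2 by lra.
have k4 : (0 : R) <= 4 by lra.
have := sqrt_bound k2 e0 J2; have := sqrt_bound k4 e0 K2.
lra.
Qed.

Lemma mid_part (f eps t1 t2 : R) (w g : R -> R) (y : R) :
  1 <= f <= 2 -> 0 <= eps -> -1 <= t1 -> t1 <= y -> y <= t2 -> t2 <= 1 ->
  intg t1 t2 g -> intg t1 t2 (fun x => g x ^+ 2) ->
  w y = II t1 y g ->
  II t1 t2 (fun x => g x ^+ 2) <= eps ->
  (1 - (t1 + 1)) ^+ 2 <= 2 * eps ->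
  (1 - (1 - t2)) ^+ 2 <= 2 * eps ->
  `|w y - f * y| <= 6 * Num.sqrt eps.
Proof.
move=> /andP[f1 f2] e0 t1m t1y yt2 t21 ig ig2 wy dGm dp dq.
have igy : intg t1 y g by apply: intgS ig; lra.
have ig2y : intg t1 y (fun x => g x ^+ 2) by apply: intgS ig2; lra.
have Gy : II t1 y (fun x => g x ^+ 2) <= eps.
  move: dGm; rewrite (@II_split _ t1 y t2) //.
  have := nn y t2 g; lra.
have wy2 : w y ^+ 2 <= 2 ^+ 2 * eps.
  rewrite wy; apply: le_trans (CS t1y igy ig2y) _.
  have : (y - t1) * II t1 y (fun x => g x ^+ 2) <= 2 * eps.
    apply: ler_pM; [lra| exact: nn | lra | lra].
  lra.
have y2e : y ^+ 2 <= 4 * eps.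
  have [y0|y0] := leP 0 y.
    have : y ^+ 2 <= t2 ^+ 2.
      have := ler_pM y0 y0 yt2 yt2; rewrite !expr2 //.
    move: dq; rewrite (_ : 1 - (1 - t2) = t2); [lra|ring].
  have : y ^+ 2 <= t1 ^+ 2.
    have h1 : 0 <= - y by lra.
    have h2 : - y <= - t1 by lra.
    have := ler_pM h1 h1 h2 h2; rewrite !mulrNN !expr2 //.
  move: dp; rewrite (_ : (1 - (t1 + 1)) ^+ 2 = t1 ^+ 2); [lra|ring].
have fy2 : (f * y) ^+ 2 <= 4 ^+ 2 * eps.
  rewrite exprMn.
  have f4 : f ^+ 2 <= 4.
    have f0 : 0 <= f by lra.
    rewrite expr2 (_ : 4 = 2 * 2 :> R); last by lra.
    exact: ler_pM.
  have := ler_pM (sqr_ge0 f) (sqr_ge0 y) f4 y2e; lra.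
apply: le_trans (ler_normB _ _) _.
have k2 : (0 : R) <= 2 by lra.
have k4 : (0 : R) <= 4 by lra.
have := sqrt_bound k2 e0 wy2; have := sqrt_bound k4 e0 fy2.
lra.
Qed.
End S7.

Section S3.
Variable R : realType.
Notation mu := (@lebesgue_measure R).

Lemma core (f eps : R) (w g : R -> R) :
  1 <= f <= 2 -> 0 <= eps ->
  intg (-1) 1 g -> intg (-1) 1 (fun x => g x ^+ 2) ->
  (forall y, -1 <= y <= 1 -> w y = w (-1) + II (-1) y g) ->
  w (-1) = - f -> w 1 = f ->
  (forall t1 t2, -1 <= t1 -> t1 <= t2 -> t2 <= 1 ->
     (forall y, -1 <= y < t1 -> w y != 0) -> (forall y, t2 < y <= 1 -> w y != 0) ->
     II (-1) 1 (fun x => g x ^+ 2) + (t1 + 1) + (1 - t2) <= 2 * f ^+ 2 + 2 + eps) ->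
  forall y, -1 <= y <= 1 -> `|w y - f * y| <= 6 * Num.sqrt eps.
Proof.
move=> /andP[f1 f2] e0 ig ig2 hw wm1 w1 hH.
set G := II (-1) 1 (fun x => g x ^+ 2).
have iS : forall (a b : R) (h : R -> R), -1 <= a -> b <= 1 -> intg (-1) 1 h -> intg a b h.
  by move=> a b h a1 b1; apply: intgS.
have nn : forall (a b : R) (h : R -> R), 0 <= II a b (fun x => h x ^+ 2).
  by move=> a b h; apply: II_ge0 => x _; exact: sqr_ge0.
have wdiff : forall a b, -1 <= a -> a <= b -> b <= 1 -> w b - w a = II a b g.
  move=> a b a1 ab b1.
  have hb : -1 <= b <= 1 by apply/andP; split; lra.
  have ha : -1 <= a <= 1 by apply/andP; split; lra.
  rewrite (hw b hb) (hw a ha).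
  rewrite (@II_split _ (-1) a b) //; last by apply: iS; rewrite ?lexx.
  ring.
have Gsub : forall a b, -1 <= a -> a <= b -> b <= 1 ->
    II a b (fun x => g x ^+ 2) <= G.
  move=> a b a1 ab b1.
  rewrite /G (@II_split _ (-1) a 1) //; last exact: le_trans ab b1.
  rewrite (@II_split _ a b 1) //; last by apply: iS; rewrite ?lexx.
  have := nn (-1) a g; have := nn b 1 g; lra.
have G0 : 0 <= G by exact: nn.
have hol : forall a b, -1 <= a -> a <= b -> b <= 1 -> (w b - w a) ^+ 2 <= (b - a) * G.
  move=> a b a1 ab b1; rewrite wdiff //.
  apply: le_trans (CS ab (iS _ _ _ a1 b1 ig) (iS _ _ _ a1 b1 ig2)) _.
  by apply: ler_wpM2l; [rewrite subr_ge0 | exact: Gsub].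
have wm1n : w (-1) < 0 by rewrite wm1; lra.
have w1p : 0 < w 1 by rewrite w1; lra.
have [t1 [t1m t11 wt1 nz1]] := first_zero G0 hol wm1n w1p.
pose w' := fun y => - w (- y).
have hol' : forall a b, -1 <= a -> a <= b -> b <= 1 -> (w' b - w' a) ^+ 2 <= (b - a) * G.
  move=> a b a1 ab b1; rewrite /w'.
  have h1 : -1 <= - b by lra.
  have h2 : - b <= - a by lra.
  have h3 : - a <= 1 by lra.
  have := hol (- b) (- a) h1 h2 h3.
  have -> : (- w (- b) - - w (- a)) ^+ 2 = (w (- a) - w (- b)) ^+ 2 by ring.
  have -> : b - a = - a - - b by ring.
  done.
have wm1n' : w' (-1) < 0 by rewrite /w' opprK w1; lra.
have w1p' : 0 < w' 1 by rewrite /w' wm1; lra.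
have [t' [t'm t'1 wt' nz']] := first_zero G0 hol' wm1n' w1p'.
set t2 := - t'.
have wt2 : w t2 = 0 by move: wt'; rewrite /w' => /eqP; rewrite oppr_eq0 => /eqP.
have nz2 : forall y, t2 < y <= 1 -> w y != 0.
  move=> y /andP[y1 y2].
  have h : -1 <= - y < t' by rewrite /t2 in y1; apply/andP; split; lra.
  by have := nz' _ h; rewrite /w' /= opprK oppr_eq0.
have t12 : t1 <= t2.
  rewrite leNgt; apply/negP => h.
  have : w t2 != 0 by apply: nz1; rewrite /t2 in h *; apply/andP; split; lra.
  by rewrite wt2 eqxx.
have t21 : t2 < 1 by rewrite /t2; lra.
have HH := hH t1 t2 (ltW t1m) t12 (ltW t21) nz1 nz2.
set p := t1 + 1 in HH *.
set q := 1 - t2 in HH *.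
have p0 : 0 < p by rewrite /p; lra.
have q0 : 0 < q by rewrite /q; lra.
have pq2 : p + q <= 2 by rewrite /p /q; lra.
have pn : p != 0 by rewrite gt_eqF.
have qn : q != 0 by rewrite gt_eqF.
set G1 := II (-1) t1 (fun x => g x ^+ 2).
set Gm := II t1 t2 (fun x => g x ^+ 2).
set G2 := II t2 1 (fun x => g x ^+ 2).
have GG : G = G1 + Gm + G2.
  rewrite /G (@II_split _ (-1) t1 1) //; [|lra].
  rewrite (@II_split _ t1 t2 1) //; [by rewrite addrA|lra|].
  by apply: iS => //; lra.
have If1 : II (-1) t1 g = f by rewrite -wdiff ?wt1 ?wm1; [ring|lra|lra|lra].
have If2 : II t2 1 g = f by rewrite -wdiff ?wt2 ?w1; [ring|lra|lra|lra].
set c1 := f / p.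
set c2 := f / q.
have ig1 : intg (-1) t1 g by apply: iS => //; lra.
have ig12 : intg (-1) t1 (fun x => g x ^+ 2) by apply: iS => //; lra.
have ig2' : intg t2 1 g by apply: iS => //; lra.
have ig22 : intg t2 1 (fun x => g x ^+ 2) by apply: iS => //; lra.
set E1 := II (-1) t1 (fun x => (g x - c1) ^+ 2).
set E2 := II t2 1 (fun x => (g x - c2) ^+ 2).
have E1e : E1 = G1 - 2 * c1 * f + c1 ^+ 2 * p.
  by rewrite /E1 II_sq // ?If1 //; [rewrite /p; congr (_ + _); ring|lra].
have E2e : E2 = G2 - 2 * c2 * f + c2 ^+ 2 * q.
  by rewrite /E2 II_sq // ?If2; [|lra].
have E1f : G1 = E1 + f ^+ 2 / p by rewrite E1e /c1; field.
have E2f : G2 = E2 + f ^+ 2 / q by rewrite E2e /c2; field.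
have E10 : 0 <= E1 by exact: nn.
have E20 : 0 <= E2 by exact: nn.
have Gm0 : 0 <= Gm by exact: nn.
have A := alg p0 q0 pq2 f1.
move: HH; rewrite -/G GG E1f E2f => HH.
have sq0p := sqr_ge0 (1 - p).
have sq0q := sqr_ge0 (1 - q).
have dp : (1 - p) ^+ 2 <= 2 * eps by lra.
have dq : (1 - q) ^+ 2 <= 2 * eps by lra.
have dE1 : E1 <= eps by lra.
have dE2 : E2 <= eps by lra.
have dGm : Gm <= eps by lra.
have s0 := sqrtr_ge0 eps.
have fb : 1 <= f <= 2 by rewrite f1 f2.
move=> y /andP[y1 y2].
have [yt1|t1y] := leP y t1.
  apply: (left_part fb e0 t1m t11 y1 yt1 ig1 ig12 _ dE1 dp).
  have := wdiff (-1) y (lexx _) y1 y2; rewrite wm1 => E.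
  by rewrite -E; ring.
have [yt2|t2y] := leP y t2.
  have igm : intg t1 t2 g by apply: iS => //; lra.
  have igm2 : intg t1 t2 (fun x => g x ^+ 2) by apply: iS => //; lra.
  apply: (mid_part fb e0 (ltW t1m) (ltW t1y) yt2 (ltW t21) igm igm2 _ dGm dp dq).
  have := wdiff t1 y (ltW t1m) (ltW t1y) y2; rewrite wt1 => E.
  by rewrite -E; ring.
have t2m : -1 <= t2 by lra.
apply: (right_part fb e0 t2m t21 (ltW t2y) y2 ig2' ig22 _ dE2 dq).
have := wdiff y 1 y1 y2 (lexx _); rewrite w1 => E.
by rewrite -E; ring.
Qed.
End S3.

Section S9.
Variable R : realType.
Notation mu := (@lebesgue_measure R).

Lemma le_leb (A B : set R) : A `<=` B -> (mu A <= mu B)%E.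
Proof.
move=> AB.
rewrite /lebesgue_measure /lebesgue_stieltjes_measure /measure_extension.
exact: le_outer_measure.
Qed.

Lemma int_E (g : R -> R) : intg (-1) 1 (fun x => g x ^+ 2) ->
  (\int[mu]_(y in `[(-1)%R, 1%R]) ((g y) ^+ 2)%R%:E)%E = (II (-1) 1 (fun x => g x ^+ 2))%:E.
Proof. by move=> ig; rewrite /II /Rintegral fineK //; exact: integrable_fin_num. Qed.

Lemma leb_itv (a b : R) b0 b1 : a <= b ->
  mu [set` Interval (BSide b0 a) (BSide b1 b)] = (b - a)%:E.
Proof.
move=> ab; rewrite lebesgue_measure_itv /=.
case: (boolP (a < b)) => ab'.
  by rewrite lte_fin; case: b0 b1 => [] []; rewrite /= ?bnd_simp ?ab' //= -EFinD.
have -> : a = b by apply/le_anti; rewrite ab leNgt ab'.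
by rewrite subrr; case: b0 b1 => [] []; rewrite /= ?bnd_simp ?ltxx.
Qed.

Lemma meas_lb (u : R -> R) (t1 t2 : R) : -1 <= t1 -> t1 <= t2 -> t2 <= 1 ->
  (forall y, -1 <= y < t1 -> u y != 0) -> (forall y, t2 < y <= 1 -> u y != 0) ->
  ((t1 + 1 + (1 - t2))%:E <= mu [set y : R | ((-1 <= y <= 1) /\ u y != 0)%R])%E.
Proof.
move=> t1m t12 t21 nz1 nz2.
apply: (@le_trans _ _ (mu ([set` `[-1, t1[%R] `|` [set` `]t2, 1]%R]))).
  have mU : mu ([set` `[-1, t1[%R] `|` [set` `]t2, 1]%R]) =
    (mu [set` `[-1, t1[%R] + mu [set` `]t2, 1]%R])%E.
    apply: measureU => //.
    apply/seteqP; split => // y /= []; rewrite !in_itv /= => /andP[_ h1] /andP[h2 _].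
    lra.
  have e1 : mu [set` `[-1, t1[%R] = (t1 - -1)%:E by apply: leb_itv.
  have e2 : mu [set` `]t2, 1]%R] = (1 - t2)%:E by apply: leb_itv.
  rewrite mU e1 e2 -EFinD lee_fin; lra.
apply: le_leb => y /= [] ; rewrite in_itv /= => /andP[h1 h2]; split.
- by apply/andP; split; lra.
- by apply: nz1; rewrite h1 h2.
- by apply/andP; split; lra.
- by apply: nz2; rewrite h1 h2.
Qed.
End S9.

Section S12.
Variable R : realType.
Notation mu := (@lebesgue_measure R).

Lemma intg_of_Hx (u gu : R -> R) (B : R) : W12 u gu -> (Hx u gu <= B%:E)%E ->
  intg (-1) 1 (fun x => gu x ^+ 2) /\ intg (-1) 1 gu.
Proof.
move=> [mg _] HB.
have mg' : measurable_fun (`[-1, 1] : set (measurableTypeR R)) gu := mg.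
have m2 : measurable_fun (`[-1, 1] : set (measurableTypeR R)) (EFin \o (fun x => gu x ^+ 2)).
  by apply/measurable_EFinP; exact: measurable_funX.
have i2 : intg (-1) 1 (fun x => gu x ^+ 2).
  apply/integrableP; split => //.
  have -> : (\int[mu]_(x in `[(-1)%R, 1%R]) `|(EFin \o (fun x => (gu x ^+ 2)%R)) x|)%E =
            (\int[mu]_(x in `[(-1)%R, 1%R]) ((gu x ^+ 2)%R)%:E)%E.
    by apply: eq_integral => x _ /=; rewrite ger0_norm // sqr_ge0.
  apply: (@le_lt_trans _ _ B%:E); last exact: ltry.
  apply: le_trans HB; rewrite /Hx /=; apply: leeDl; exact: measure_ge0.
split => //.
have i3 : intg (-1) 1 (fun x => 1 + gu x ^+ 2) by apply: intgD (intg_cst _ _ _) i2.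
apply: le_integrable i3 => //.
  by apply/measurable_EFinP.
move=> x _ /=; rewrite lee_fin.
have h0 : 0 <= 1 + gu x ^+ 2 by have := sqr_ge0 (gu x); lra.
rewrite (ger0_norm h0).
have [h|h] := leP `|gu x| 1.
  have := sqr_ge0 (gu x); lra.
have : `|gu x| <= `|gu x| ^+ 2.
  have n0 : 0 <= `|gu x| by [].
  rewrite expr2; have := ler_pM ler01 n0 (ltW h) (lexx `|gu x|).
  by rewrite mul1r.
rewrite real_normK ?num_real //; lra.
Qed.
End S12.

Definition lebR (R : realType) : set R -> \bar R := lebesgue_measure.
HB.instance Definition _ (R : realType) := isMeasure.Build default_measure_display R R (@lebR R)
  (measure0 (@lebesgue_measure R)) (measure_ge0 (@lebesgue_measure R))
  (@measure_semi_sigma_additive _ _ _ (@lebesgue_measure R)).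

Lemma intgR_cst (R : realType) (a b k : R) :
  (lebesgue_measure : set R -> \bar R).-integrable (`[a, b] : set R) (fun _ => k%:E).
Proof.
change ((@lebR R).-integrable (`[a, b] : set R) (fun _ => k%:E)).
apply/integrableP; split; first exact: measurable_cst.
rewrite (@integral_cst _ _ _ (@lebR R) _ (measurable_itv `[a, b]%R)) /=.
have -> : lebR `[a, b] = lebesgue_measure [set` `[a, b]%R] by [].
rewrite lebesgue_measure_itv /=.
case: ifP => _; last by rewrite mule0 ltry.
by rewrite -EFinD -EFinM ltry.
Qed.

Section S10.
Variable R : realType.
Notation mu := (@lebesgue_measure R).

Lemma hH_of (f eps : R) (u gu : R -> R) : W12 u gu ->
  (Hx u gu <= (2 * f ^+ 2 + 2 + eps)%:E)%E ->
  forall t1 t2, -1 <= t1 -> t1 <= t2 -> t2 <= 1 ->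
     (forall y, -1 <= y < t1 -> u y != 0) -> (forall y, t2 < y <= 1 -> u y != 0) ->
     II (-1) 1 (fun x => gu x ^+ 2) + (t1 + 1) + (1 - t2) <= 2 * f ^+ 2 + 2 + eps.
Proof.
move=> Wu HH t1 t2 t1m t12 t21 nz1 nz2.
have [ig2 _] := intg_of_Hx Wu HH.
have M := meas_lb t1m t12 t21 nz1 nz2.
move: HH; rewrite /Hx /= int_E; last exact: ig2.
move=> HH.
rewrite -lee_fin -addrA EFinD; apply: le_trans HH.
exact: leeD2l.
Qed.

Lemma fN_le2 (alpha N x : R) : 0 < alpha -> 0 < N -> fN alpha N x <= 2.
Proof.
move=> a0 N0; rewrite /fN; case: ifP => _; first lra.
case: ifP => h; last lra.
have : `|x| * (1 + alpha) / N <= 2 * (1 + alpha).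
  rewrite ler_pdivrMr //.
  have : `|x| * (1 + alpha) <= (2 * N) * (1 + alpha) by apply: ler_wpM2r => //; lra.
  lra.
lra.
Qed.

Lemma lin_adm (alpha N x : R) :
  admissible alpha N x (fun y => fN alpha N x * y) (fun _ => fN alpha N x).
Proof.
set f := fN alpha N x.
split; last by split; rewrite ?mulrN1 ?mulr1.
split; first exact: measurable_cst.
split; first exact: (intgR_cst (-1) 1 (f ^+ 2)).
split; first exact: (intgR_cst (-1) 1 f).
move=> y /andP[y1 _].
have E : Rintegral mu (`[-1, y] : set R) (fun _ => f) = f * (y - -1) by exact: II_cst.
rewrite E; ring.
Qed.

Lemma Hx_lin (f : R) : (Hx (fun y => (f * y)%R) (fun _ => f) <= ((2 * f ^+ 2 + 2)%R)%:E)%E.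
Proof.
rewrite /Hx /= int_E; last exact: (intg_cst (-1) 1 (f ^+ 2)).
have -> : II (-1) 1 (fun x => (fun _ : R => f) x ^+ 2) = f ^+ 2 * (1 - -1).
  have h : (-1 : R) <= 1 by lra.
  exact: (II_cst (f ^+ 2) h).
have e : mu [set` `[-1, 1]%R] = (1 - -1)%:E by apply: leb_itv; lra.
have M : (mu [set y : R | ((-1 <= y <= 1) /\ f * y != 0)%R] <= 2%:E)%E.
  have sub : [set y : R | ((-1 <= y <= 1) /\ f * y != 0)%R] `<=` [set` `[-1, 1]%R].
    by move=> y /= [h _]; rewrite in_itv.
  apply: le_trans (le_leb sub) _.
  by rewrite [mu _]e lee_fin; lra.
rewrite EFinD; apply: leeD; rewrite ?lee_fin //; lra.
Qed.

End S10.

Theorem lemma3p6 (R : realType) (alpha N : R) :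
  0 < alpha < 1 -> 0 < N ->
  exists C : R, 0 < C /\
    forall (x eps : R) (w gw v gv : R -> R),
      - (3 * N) < x < 3 * N ->
      1 <= fN alpha N x ->
      0 < eps < 1 ->
      admissible alpha N x w gw ->
      is_minimizer alpha N x v gv ->
      (Hx w gw <= Hx v gv + eps%:E)%E ->
      forall y, -1 <= y <= 1 -> `|w y - v y| <= C * Num.sqrt eps.
Proof.
move=> /andP[a0 a1] N0; exists 12; split; first lra.
move=> x eps w gw v gv _ f1 /andP[e0 e1] [Ww [wm1 w1]] [[Wv [vm1 v1]] vmin] Hwv y hy.
have f2 := fN_le2 x a0 N0.
set f := fN alpha N x in f1 f2 wm1 w1 vm1 v1 vmin.
have fb : 1 <= f <= 2 by rewrite f1 f2.
have e0' : 0 <= eps by lra.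
have hlin := vmin _ _ (lin_adm alpha N x).
have Hl := Hx_lin f.
have Hv : (Hx v gv <= (2 * f ^+ 2 + 2 + eps)%:E)%E.
  apply: le_trans hlin _; apply: le_trans Hl _; rewrite lee_fin; lra.
have Hw : (Hx w gw <= (2 * f ^+ 2 + 2 + eps)%:E)%E.
  apply: le_trans Hwv _; rewrite EFinD; apply: leeD2r.
  exact: le_trans hlin Hl.
have cw : `|w y - f * y| <= 6 * Num.sqrt eps.
  case: (Ww) => [_ [_ [_ hw]]].
  have [ig2 ig] := intg_of_Hx Ww Hw.
  exact: (core fb e0' ig ig2 hw wm1 w1 (hH_of Ww Hw)).
have cv : `|v y - f * y| <= 6 * Num.sqrt eps.
  case: (Wv) => [_ [_ [_ hw]]].
  have [ig2 ig] := intg_of_Hx Wv Hv.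
  exact: (core fb e0' ig ig2 hw vm1 v1 (hH_of Wv Hv)).
have -> : w y - v y = (w y - f * y) - (v y - f * y) by ring.
apply: le_trans (ler_normB _ _) _; lra.
Qed.
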